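(* Let $i,j,m$ be non-negative integers. Then \[2^{2m}\,C(i,j)=\sum_{b=0}^m\binom{m}{b}\,C(i+b,\,m+j-b).\]
   Context: $C(p,q)=\frac{(2p)!(2q)!}{p!(p+q)!q!}$ for non-negative integers $p,q$. *)

(* Defs.v *)
From mathcomp Require Import all_boot all_order all_algebra.
Set Implicit Arguments. Unset Strict Implicit. Unset Printing Implicit Defensive.
Import GRing.Theory Num.Theory.
Local Open Scope ring_scope.

(* Super Catalan numbers C(p,q) = (2p)!(2q)! / (p! (p+q)! q!), computed
   exactly in the rationals (no truncating division). *)
Definition superC (p q : nat) : rat :=
  ((2 * p)`!%:R * (2 * q)`!%:R) / (p`!%:R * (p + q)`!%:R * q`!%:R).

(* Main.v *)
Require Import Defs.
From mathcomp Require Import all_boot all_order all_algebra.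
From mathcomp Require Import zify ring lra.
Import GRing.Theory Num.Theory.
Local Open Scope ring_scope.

Lemma fact_neq0 n : (n`!%:R : rat) != 0.
Proof. by rewrite pnatr_eq0 -lt0n fact_gt0. Qed.

Lemma superC_rec p q :
  4%:R * superC p q = superC p.+1 q + superC p q.+1.
Proof.
rewrite /superC.
have e1 : (2 * p.+1 = (2 * p).+2)%N by lia.
have e2 : (2 * q.+1 = (2 * q).+2)%N by lia.
have e3 : (p.+1 + q = (p + q).+1)%N by lia.
have e4 : (p + q.+1 = (p + q).+1)%N by lia.
rewrite e1 e2 e3 e4 !factS !natrM.
have h1 := fact_neq0 p; have h2 := fact_neq0 q; have h3 := fact_neq0 (p+q).
have h4 : ((p + q).+1%:R : rat) != 0 by rewrite pnatr_eq0.
have h5 : (p.+1%:R : rat) != 0 by rewrite pnatr_eq0.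
have h6 : (q.+1%:R : rat) != 0 by rewrite pnatr_eq0.
rewrite !mulrSr !natrD. rewrite -!mulrSr.
rewrite [in X in _ = X]/=.
field.
have hp := ler0n rat p; have hq := ler0n rat q.
rewrite h1 h2 h3 /=.
by apply/and3P; split; apply/eqP; lra.
Qed.

Lemma main_ord (m : nat) : forall i j : nat,
  (2 ^ (2 * m))%:R * superC i j =
  \sum_(b < m.+1) 'C(m, b)%:R * superC (i + b) (m + j - b).
Proof.
elim: m => [|m IH] i j.
  by rewrite big_ord1 /= mul1r add0n addn0 subn0 bin0 mul1r.
have e : (2 ^ (2 * m.+1) = 4 * 2 ^ (2 * m))%N.
  by rewrite mulnS expnD.
rewrite e natrM -mulrA mulrCA superC_rec mulrDr IH IH.
rewrite [RHS]big_ord_recl /= bin0 subn0 addn0 mul1r.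
under [in RHS]eq_bigr => b _ do rewrite /bump /= add1n binS natrD mulrDl.
rewrite big_split /= addrA addrC; congr (_ + _).
  apply: eq_bigr => b _; congr (_ * superC _ _) => /=; lia.
rewrite [in RHS]big_ord_recr /= bin_small // mul0r addr0.
rewrite [LHS]big_ord_recl /= bin0 mul1r.
congr (_ + _); first by congr superC; lia.
apply: eq_bigr => b _; congr (_ * superC _ _) => /=; rewrite /bump /=; lia.
Qed.

Theorem lemma5p5 (i j m : nat) :
  (2 ^ (2 * m))%:R * superC i j =
  \sum_(0 <= b < m.+1) 'C(m, b)%:R * superC (i + b) (m + j - b).
Proof. by rewrite big_mkord main_ord. Qed.
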